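(* The recognizable subsets of the additive monoid $(\mathbb{Q}_{\ge 0}, +, 0)$ of non-negative rationals are exactly $\emptyset$, $\{0\}$, $\mathbb{Q}_{>0}$ and $\mathbb{Q}_{\ge 0}$.
   Context: A subset $S$ of a monoid $M$ is recognizable if there exist a finite monoid $N$, a monoid morphism $\varphi\colon M \to N$ and a subset $T \subseteq N$ with $S = \varphi^{-1}(T)$. *)

(* Defs.v *)
From mathcomp Require Import all_boot all_order all_algebra.
Set Implicit Arguments. Unset Strict Implicit. Unset Printing Implicit Defensive.
Import Order.TTheory GRing.Theory Num.Theory.
Local Open Scope ring_scope.

Definition is_monoid (M : Type) (op : M -> M -> M) (e : M) : Prop :=
  associative op /\ left_id e op /\ right_id e op.

Definition is_monoid_morphism (M N : Type) (opM : M -> M -> M) (eM : M)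
  (opN : N -> N -> N) (eN : N) (f : M -> N) : Prop :=
  f eM = eN /\ forall x y, f (opM x y) = opN (f x) (f y).

Definition recognizable (M : Type) (opM : M -> M -> M) (eM : M)
  (S : M -> Prop) : Prop :=
  exists (N : finType) (opN : N -> N -> N) (eN : N) (phi : M -> N) (T : {set N}),
    is_monoid opN eN /\ is_monoid_morphism opM eM opN eN phi /\
    forall x, S x <-> phi x \in T.

Definition Qnn := {q : rat | 0 <= q}.

Definition Qnn0 : Qnn := exist _ 0 (lexx 0).

Definition Qnn_add (x y : Qnn) : Qnn :=
  exist _ (proj1_sig x + proj1_sig y) (addr_ge0 (proj2_sig x) (proj2_sig y)).

(* Main.v *)
Require Import Defs.
From mathcomp Require Import all_boot all_order all_algebra.
Import Order.TTheory GRing.Theory Num.Theory.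
Local Open Scope ring_scope.

Lemma intrPosz (R : pzRingType) (n : nat) : (n%:Z)%:~R = n%:R :> R.
Proof. by []. Qed.

Lemma cross (x y : rat) (a b : nat) : y != 0 -> ((Posz b.+1)%:~R : rat) != 0 -> 
  ((Posz a.+1)%:~R : rat) / (Posz b.+1)%:~R = x / y -> x *+ b.+1 = y *+ a.+1.
Proof.
move=> yn bn h.
rewrite (pmulrn x) (pmulrn y) -(mulrzr x) -(mulrzr y).
have := congr1 (fun z => z * y * (Posz b.+1)%:~R) h.
rewrite divfK // mulrAC divfK // => <-.
by rewrite mulrC.
Qed.

Section Key.
Variables (N : finType) (op : N -> N -> N) (e : N) (psi : rat -> N).
Hypothesis psiD : forall q r : rat, 0 <= q -> 0 <= r -> psi (q + r) = op (psi q) (psi r).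

Lemma psiMn (t : rat) k l : 0 <= t -> psi (t *+ (k + l)) = op (psi (t *+ k)) (psi (t *+ l)).
Proof. by move=> t0; rewrite mulrnDr psiD // mulrn_wge0. Qed.

Lemma pigeon (t : rat) : exists i j, [/\ (i < j)%N, (j <= #|N|)%N & psi (t *+ i) = psi (t *+ j)].
Proof.
pose f (k : 'I_#|N|.+1) := psi (t *+ k).
case: (boolP [exists i : 'I_#|N|.+1, exists j : 'I_#|N|.+1, (i < j)%N && (f i == f j)]).
  case/existsP=> i /existsP [j /andP [lij /eqP E]].
  by exists i, j; split=> //; rewrite -ltnS.
move/existsPn=> H.
have inj : injective f.
  move=> i j E; apply/eqP; case: (ltngtP i j) => // lij.
  - by have := existsPn (H i) j; rewrite lij E eqxx.
  - by have := existsPn (H j) i; rewrite lij E eqxx.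
  - by rewrite -val_eqE /= lij.
by have := leq_card _ inj; rewrite card_ord ltnn.
Qed.

Lemma idem (t : rat) : 0 <= t -> op (psi (t *+ #|N|`!)) (psi (t *+ #|N|`!)) = psi (t *+ #|N|`!).
Proof.
move=> t0; have [i [j [lij ljn E]]] := pigeon t.
set p := (j - i)%N.
have per : forall r, psi (t *+ (i + r + p)) = psi (t *+ (i + r)).
  move=> r; rewrite -addnA (addnC r) addnA /p (subnKC (ltnW lij)).
  by rewrite (psiMn _ j r t0) (psiMn _ i r t0) E.
have perc : forall c r, psi (t *+ (i + r + c * p)) = psi (t *+ (i + r)).
  elim=> [|c IH] r; first by rewrite mul0n addn0.
  by rewrite mulSn addnA -(addnA i r p) IH addnA per.
have pd : (p %| #|N|`!)%N.
  apply: dvdn_fact; rewrite subn_gt0 lij /=; apply: leq_trans ljn; exact: leq_subr.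
have iln : (i <= #|N|`!)%N.
  apply: leq_trans (fact_geq _); apply: leq_trans ljn; exact: ltnW.
rewrite -(psiMn _ _ _ t0).
have -> : (#|N|`! + #|N|`! = i + (#|N|`! - i) + (#|N|`! %/ p) * p)%N.
  by rewrite (divnK pd) (subnKC iln).
by rewrite perc (subnKC iln).
Qed.

Lemma idem_pos (x : rat) : 0 < x -> op (psi x) (psi x) = psi x.
Proof.
move=> x0; set m := #|N|`!.
have mpos : (0 < m)%N by apply: fact_gt0.
have -> : x = (x / m%:R) *+ m.
  by rewrite -mulr_natr mulfVK // pnatr_eq0 -lt0n.
rewrite /m; apply: idem; apply: divr_ge0; [exact: ltW | exact: ler0n].
Qed.

Lemma pos_mul (x : rat) k : 0 < x -> psi (x *+ k.+1) = psi x.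
Proof.
move=> x0; elim: k => [|k IH] //.
by rewrite -addn1 psiMn ?ltW // IH idem_pos.
Qed.

Lemma pos_const (x y : rat) : 0 < x -> 0 < y -> psi x = psi y.
Proof.
move=> x0 y0; set r := x / y.
have r0 : 0 < r by rewrite divr_gt0.
have n0 : 0 < numq r by rewrite numq_gt0.
have d0 : 0 < denq r by [].
have [a Ea] : exists a, numq r = a.+1%:Z.
  by case: (numq r) n0 => [[|a]|] //; exists a.
have [b Eb] : exists b, denq r = b.+1%:Z.
  by case: (denq r) d0 => [[|b]|] //; exists b.
rewrite -(pos_mul _ b x0) -(pos_mul _ a y0).
have := divq_num_den r; rewrite Ea Eb => h0.
congr psi; apply: cross h0.
- by rewrite gt_eqF.
- by rewrite intq_eq0.
Qed.
End Key.

Theorem mainTheorem3 (S : Qnn -> Prop) :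
  recognizable Qnn_add Qnn0 S <->
  [\/ (forall x : Qnn, S x <-> False),
      (forall x : Qnn, S x <-> proj1_sig x = 0),
      (forall x : Qnn, S x <-> 0 < proj1_sig x)
    | (forall x : Qnn, S x <-> True)].
Proof.
split.
- move=> [N [op [e [phi [T [[opA [op1 op2]] [[phi0 phiD] HS]]]]]]].
  pose psi (q : rat) := phi (insubd Qnn0 q).
  have phipsi : forall x, phi x = psi (proj1_sig x).
    by move=> x; rewrite /psi valKd.
  have psiD : forall q r : rat, 0 <= q -> 0 <= r -> psi (q + r) = op (psi q) (psi r).
    move=> q r q0 r0; rewrite /psi -phiD; congr phi; apply: val_inj.
    rewrite insubdK; last exact: addr_ge0.
    by rewrite /= (insubdK _ q0) (insubdK _ r0).
  have psi0 : psi 0 = e.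
    rewrite -phi0 /psi; congr phi; apply: val_inj; by rewrite insubdK.
  have key : forall x : Qnn, phi x = if proj1_sig x == 0 then e else psi 1.
    move=> x; rewrite phipsi; case: eqP => [->|/eqP xn0] //.
    apply: (@pos_const _ _ _ psiD); last exact: ltr01.
    by rewrite lt_def xn0 (proj2_sig x).
  have HS' : forall x, S x <-> (if proj1_sig x == 0 then e else psi 1) \in T.
    by move=> x; rewrite -key.
  case: (boolP (e \in T)) => eT; case: (boolP (psi 1 \in T)) => cT.
  + apply: Or44 => x; apply: (iff_trans (HS' x)); by case: ifP.
  + apply: Or42 => x; apply: (iff_trans (HS' x)); case: eqP => [->|] //; by rewrite (negbTE cT).
  + apply: Or43 => x; apply: (iff_trans (HS' x)); case: eqP => [->|/eqP xn0]; first by rewrite (negbTE eT) ltxx.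
    by rewrite cT lt_def xn0 (proj2_sig x).
  + apply: Or41 => x; apply: (iff_trans (HS' x)); case: ifP => _; by [rewrite (negbTE eT) | rewrite (negbTE cT)].
- have mon : is_monoid orb false by split; [exact: orbA | split; [by case | exact: orbF]].
  have mor : is_monoid_morphism Qnn_add Qnn0 orb false (fun x : Qnn => proj1_sig x != 0).
    split; first by apply/negbTE; rewrite negbK; exact: eqxx.
    move=> [x x0] [y y0] /=; by rewrite paddr_eq0 // negb_and.
  case=> H.
  + exists bool, orb, false, (fun x : Qnn => proj1_sig x != 0), set0.
    split; first exact: mon. split; first exact: mor. move=> x.
    apply: (iff_trans (H x)); rewrite in_set0; by split.
  + exists bool, orb, false, (fun x : Qnn => proj1_sig x != 0), [set false].
    split; first exact: mon. split; first exact: mor. move=> x.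
    apply: (iff_trans (H x)); rewrite in_set1 /=.
    case: (sval x =P 0) => [E|/eqP nE]; first by rewrite E eqxx; split.
    split=> // E; by rewrite E eqxx in nE.
  + exists bool, orb, false, (fun x : Qnn => proj1_sig x != 0), [set true].
    split; first exact: mon. split; first exact: mor. move=> x.
    apply: (iff_trans (H x)); rewrite in_set1 /= lt_def (proj2_sig x) andbT eqb_id; by split.
  + exists bool, orb, false, (fun x : Qnn => proj1_sig x != 0), setT.
    split; first exact: mon. split; first exact: mor. move=> x.
    apply: (iff_trans (H x)); rewrite in_setT; by split.
Qed.
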